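(* Let $h:\{0,1\}^*\to\{0,1\}^*$ be the morphism defined by $h(0)=0110100110110010110$ and $h(1)=1001011001001101001$. (a) If $h(ab)=t\,h(c)\,u$ for some letters $a,b,c\in\{0,1\}$ and words $t,u\in\{0,1\}^*$, then $t=\epsilon$ or $u=\epsilon$. (b) If there exist letters $a,b,c\in\{0,1\}$ and words $s,t,u,v\in\{0,1\}^*$ such that $h(a)=st$, $h(b)=uv$ and $h(c)=sv$, then $a=c$ or $b=c$.
   Context: $\epsilon$ denotes the empty word. *)

(* Defs.v *)
From mathcomp Require Import all_boot.
Set Implicit Arguments. Unset Strict Implicit. Unset Printing Implicit Defensive.

(* Words over {0,1} are represented as [seq bool] with 0 = false, 1 = true. *)
Definition bits (s : seq nat) : seq bool := [seq (n == 1) | n <- s].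

Definition h0 : seq bool := bits [:: 0;1;1;0;1;0;0;1;1;0;1;1;0;0;1;0;1;1;0].
Definition h1 : seq bool := bits [:: 1;0;0;1;0;1;1;0;0;1;0;0;1;1;0;1;0;0;1].

Definition hl (a : bool) : seq bool := if a then h1 else h0.

Definition h (w : seq bool) : seq bool := flatten (map hl w).

(* Main.v *)
Require Import Defs.
From mathcomp Require Import all_boot.
From Stdlib Require Import Lia.
From mathcomp Require Import zify.

Lemma hE c : h [:: c] = hl c.
Proof. by rewrite /h /= cats0. Qed.

Lemma sz c : size (hl c) = 19.
Proof. by case: c. Qed.

Lemma chkA : all (fun a => all (fun b => all (fun c => all (fun k =>
   take 19 (drop k (h [:: a; b])) != hl c) (iota 1 18)) [:: true; false]) [:: true; false]) [:: true; false].
Proof. vm_compute. reflexivity. Qed.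

Lemma chkB : all (fun a => all (fun b => all (fun c => all (fun k =>
   (hl c == take k (hl a) ++ drop k (hl b)) ==> ((a == c) || (b == c))) (iota 0 20)) [:: true; false]) [:: true; false]) [:: true; false].
Proof. vm_compute. reflexivity. Qed.

Lemma inb (a : bool) : a \in [:: true; false].
Proof. by case: a. Qed.

Lemma chkA' a b c k : k \in iota 1 18 -> take 19 (drop k (h [:: a; b])) != hl c.
Proof.
move=> Hk.
exact: (allP (allP (allP (allP chkA a (inb a)) b (inb b)) c (inb c)) k Hk).
Qed.

Lemma chkB' a b c k : k \in iota 0 20 ->
  (hl c == take k (hl a) ++ drop k (hl b)) -> (a = c) \/ (b = c).
Proof.
move=> Hk E.
move: (allP (allP (allP (allP chkB a (inb a)) b (inb b)) c (inb c)) k Hk).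
rewrite E /= => /orP[/eqP -> | /eqP ->]; by [left | right].
Qed.

Theorem lemma12 :
  (forall (a b c : bool) (t u : seq bool),
      h [:: a; b] = t ++ h [:: c] ++ u -> t = [::] \/ u = [::]) /\
  (forall (a b c : bool) (s t u v : seq bool),
      h [:: a] = s ++ t -> h [:: b] = u ++ v -> h [:: c] = s ++ v ->
      a = c \/ b = c).
Proof.
split.
- move=> a b c t u H.
  have Hs : size (h [:: a; b]) = 38 by rewrite /h /= size_cat cats0 !sz.
  have Hsz := f_equal size H.
  rewrite hE Hs !size_cat sz in Hsz.
  case: t H Hsz => [|x t] H Hsz; first by left.
  case: u H Hsz => [|y u] H Hsz; first by right.
  exfalso.
  have Hd : take 19 (drop (size (x :: t)) (h [:: a; b])) = hl c.
    by rewrite H drop_size_cat // hE take_size_cat ?sz.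
  have Hk : size (x :: t) \in iota 1 18.
    rewrite mem_iota /=; move: Hsz => /= Hsz; lia.
  clear H Hs.
  by move: (@chkA' a b c _ Hk); rewrite Hd eqxx.
- move=> a b c s t u v.
  rewrite !hE => Ha Hb Hc.
  have S1 := f_equal size Ha; have S2 := f_equal size Hb; have S3 := f_equal size Hc.
  rewrite !size_cat !sz in S1 S2 S3.
  have Es : s = take (size s) (hl a) by rewrite Ha take_size_cat.
  have Ev : v = drop (size s) (hl b).
    have -> : size s = size u by lia.
    by rewrite Hb drop_size_cat.
  have Hk : size s \in iota 0 20 by rewrite mem_iota /=; apply/ltP; lia.
  have Hc' : hl c == take (size s) (hl a) ++ drop (size s) (hl b).
    by rewrite Hc -Es -Ev.
  clear Ha Hb Hc Es Ev.
  exact: (@chkB' a b c _ Hk Hc').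
Qed.
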